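(* A finite simple graph $G$ is a caterpillar forest (every connected component is a caterpillar, i.e. a tree in which removing all leaves leaves a path) if and only if it admits a $CF$-free circular ordering.
   Context: A circular ordering of a finite set is obtained by placing its elements at distinct points of a circle. A circularly ordered graph is a graph with a circular ordering of its vertices; isomorphism means a graph isomorphism preserving circular orderings; induced circularly ordered subgraphs are induced subgraphs with the restricted ordering. A circular ordering $C$ of $V(G)$ is $CF$-free if no induced circularly ordered subgraph of $(G,C)$ is isomorphic to a member of $CF$. $CF$ consists of the following circularly ordered graphs (vertices $v_1,v_2,\dots$ clockwise in this order; listed edges are all edges): the triangle on $v_1,v_2,v_3$; on $v_1,\dots,v_4$: edges $v_1v_2,v_2v_3,v_3v_4,v_4v_1$; edges $v_1v_2,v_2v_4,v_4v_3,v_3v_1$; edges $v_1v_2,v_2v_3,v_3v_4$; edges $v_3v_1,v_1v_4,v_4v_2$. *)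

(* Defs.v *)
From mathcomp Require Import all_boot.
Set Implicit Arguments. Unset Strict Implicit. Unset Printing Implicit Defensive.

Definition simple_graph (T : finType) (e : rel T) : Prop :=
  symmetric e /\ irreflexive e.

Section Graphs.
Variables (T : finType) (e : rel T).

Definition nbhd (x : T) : {set T} := [set y | e x y].
Definition deg (x : T) : nat := #|nbhd x|.

Definition induced (C : {set T}) : rel T :=
  fun a b => [&& e a b, a \in C & b \in C].

Definition has_cycle_in (C : {set T}) : Prop :=
  exists c : seq T, [/\ uniq c, 3 <= size c, cycle e c & all (fun x => x \in C) c].

Definition induces_tree (C : {set T}) : Prop :=
  [/\ C != set0,
      (forall u v, u \in C -> v \in C -> connect (induced C) u v)
    & ~ has_cycle_in C].

Definition component (x : T) : {set T} := [set y | connect e x y].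

Definition nonleaves (C : {set T}) : {set T} := [set x in C | deg x != 1].

Definition consec (p : seq T) (u v : T) : bool :=
  [&& u \in p, v \in p &
      ((index u p).+1 == index v p) || ((index v p).+1 == index u p)].

Definition induces_path (S : {set T}) : Prop :=
  exists p : seq T, [/\ uniq p, S = [set x in p] &
      forall u v, u \in S -> v \in S -> e u v = consec p u v].

Definition caterpillar (C : {set T}) : Prop :=
  induces_tree C /\ induces_path (nonleaves C).

Definition caterpillar_forest : Prop :=
  forall x : T, caterpillar (component x).

(** Circular orderings: represented by an injective labelling f : T -> nat;
    vertices are placed clockwise in increasing order of f. *)
Definition clockwise (f : T -> nat) (s : seq T) : Prop :=
  exists i, sorted ltn (rot i (map f s)).

(** A circularly ordered pattern on vertices v_1..v_k (here indexed 0..k-1,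
    clockwise) with edge list es. *)
Definition pat_adj (es : seq (nat * nat)) (i j : nat) : bool :=
  ((i, j) \in es) || ((j, i) \in es).

Definition contains_pattern (f : T -> nat) (k : nat) (es : seq (nat * nat))
  : Prop :=
  exists g : 'I_k -> T, [/\ injective g,
    clockwise f [seq g i | i <- enum 'I_k] &
    forall i j : 'I_k, e (g i) (g j) = pat_adj es i j].

(** The family CF (vertex v_m is index m-1). *)
Definition CF : seq (nat * seq (nat * nat)) :=
  [:: (3, [:: (0,1); (1,2); (2,0)]);
      (4, [:: (0,1); (1,2); (2,3); (3,0)]);
      (4, [:: (0,1); (1,3); (3,2); (2,0)]);
      (4, [:: (0,1); (1,2); (2,3)]);
      (4, [:: (2,0); (0,3); (3,1)])].

Definition CF_free_circular_ordering (f : T -> nat) : Prop :=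
  injective f /\
  forall H, H \in CF -> ~ contains_pattern f H.1 H.2.
End Graphs.

(* Main.v *)
Require Import Defs.
From mathcomp Require Import all_boot.
From mathcomp Require Import zify.
From Stdlib Require Import Classical ClassicalEpsilon.
Set Implicit Arguments. Unset Strict Implicit. Unset Printing Implicit Defensive.

Definition cw (x y z : nat) :=
  ((x < y) && (y < z)) || ((y < z) && (z < x)) || ((z < x) && (x < y)).
Definition cw4 (x y z w : nat) :=
  [|| [&& x < y, y < z & z < w], [&& y < z, z < w & w < x],
      [&& z < w, w < x & x < y] | [&& w < x, x < y & y < z]].
Definition opp (u v w z : nat) := if cw u w v then cw v z u else cw u z v.

Section Cyc.
Variables (T : finType) (f : T -> nat).

Lemma clockwise3 a b c : clockwise f [:: a; b; c] <-> cw (f a) (f b) (f c).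
Proof.
split.
  case=> [[|[|[|i]]]]; try rewrite (@rot_oversize _ i.+3) //; rewrite /= /cw; lia.
rewrite /cw => H.
have : [|| (f a < f b) && (f b < f c), (f b < f c) && (f c < f a)
   | (f c < f a) && (f a < f b)] by rewrite -orbA in H.
case/or3P => Hc.
- by exists 0 => /=; lia.
- by exists 1 => /=; lia.
- by exists 2 => /=; lia.
Qed.

Lemma clockwise4 a b c d :
  clockwise f [:: a; b; c; d] <-> cw4 (f a) (f b) (f c) (f d).
Proof.
split.
  case=> [[|[|[|[|i]]]]]; try rewrite (@rot_oversize _ i.+4) //; rewrite /= /cw4; lia.
rewrite /cw4 => H.
have : [|| [&& f a < f b, f b < f c & f c < f d], [&& f b < f c, f c < f d & f d < f a],
      [&& f c < f d, f d < f a & f a < f b] | [&& f d < f a, f a < f b & f b < f c]] by [].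
case/or4P => Hc.
- by exists 0 => /=; lia.
- by exists 1 => /=; lia.
- by exists 2 => /=; lia.
- by exists 3 => /=; lia.
Qed.
End Cyc.

Section Pat.
Variables (T : finType) (e : rel T) (f : T -> nat).

Lemma pattern_of_seq k es (s : seq T) (x0 : T) :
  uniq s -> size s = k -> clockwise f s ->
  (forall i j, i < k -> j < k -> e (nth x0 s i) (nth x0 s j) = pat_adj es i j) ->
  contains_pattern e f k es.
Proof.
move=> Us Sz Cw Ad.
exists (fun i : 'I_k => nth x0 s i); split.
- move=> i j /eqP; rewrite nth_uniq ?Sz // => /eqP H; exact: val_inj.
- have -> : [seq nth x0 s i | i : 'I_k <- enum 'I_k] = s.
    by rewrite (map_comp (nth x0 s) val) val_enum_ord -Sz -/(mkseq _ _) mkseq_nth.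
  exact: Cw.
- move=> i j; exact: Ad.
Qed.

Lemma seq_of_pattern k es (x0 : T) :
  contains_pattern e f k es -> exists s : seq T,
  [/\ uniq s, size s = k, clockwise f s &
  (forall i j, i < k -> j < k -> e (nth x0 s i) (nth x0 s j) = pat_adj es i j)].
Proof.
case=> g [gi Cw Ad].
exists [seq g i | i <- enum 'I_k]; split => //.
- by rewrite map_inj_uniq ?enum_uniq.
- by rewrite size_map size_enum_ord.
- move=> i j Hi Hj.
  rewrite (nth_map (Ordinal Hi)) ?size_enum_ord //.
  rewrite (nth_map (Ordinal Hi)) ?size_enum_ord //.
  rewrite Ad !nth_enum_ord //.
Qed.
End Pat.

Lemma cw4_rot x y z w : cw4 x y z w -> cw4 y z w x.
Proof. by rewrite /cw4 => /or4P [] ->; rewrite ?orbT. Qed.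

Ltac ordtac4 a b c d :=
  case: (ltngtP a b); case: (ltngtP a c); case: (ltngtP a d);
  case: (ltngtP b c); case: (ltngtP b d); case: (ltngtP c d) => //=; lia.

Lemma opp_abdc a b c d : cw4 a b d c -> opp b c a d.
Proof. rewrite /opp /cw /cw4; ordtac4 a b c d. Qed.

Lemma opp_acdb a b c d : cw4 a c d b -> opp b c a d.
Proof. rewrite /opp /cw /cw4; ordtac4 a b c d. Qed.

Lemma cw_asym a b c : cw a b c -> cw a c b = false.
Proof. rewrite /cw; lia. Qed.
Lemma cw_rot a b c : cw a b c = cw b c a.
Proof. rewrite /cw; lia. Qed.
Lemma cw_trans v w u z : cw v w u -> cw v z w -> cw v z u.
Proof. rewrite /cw; lia. Qed.
Lemma cw_trans2 u w v z : cw u w v -> cw w z v -> cw u z v.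
Proof. rewrite /cw; lia. Qed.

Lemma opp_self u v w : opp u v w w = false.
Proof.
rewrite /opp; case: ifP => // H.
by move: H; rewrite /cw; lia.
Qed.

Lemma opp_arc u v x w z : opp u v x w -> opp v w u z -> opp u v x z.
Proof.
rewrite /opp; case: ifP => Hx H1.
- have -> : cw v u w = false by apply: cw_asym.
  move=> /= H2; apply: (cw_trans H1 H2).
- have -> : cw v u w = true by move: H1; rewrite /cw; lia.
  move=> /= H2; apply: (cw_trans2 H1 H2).
Qed.


Lemma exists_max (A : Type) (P : A -> Prop) (sz : A -> nat) N a0 :
  (forall a, P a -> sz a <= N) -> P a0 ->
  exists a, P a /\ forall b, P b -> sz b <= sz a.
Proof.
move=> Hb Pa0.
suff H : forall k a, P a -> N - sz a <= k ->
    exists a, P a /\ forall b, P b -> sz b <= sz a.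
  exact: (H (N - sz a0) a0 Pa0).
elim=> [|k IH] a Pa Hk.
- exists a; split => // b Pb; have := Hb b Pb; have := Hb a Pa; lia.
- case: (classic (exists b, P b /\ sz a < sz b)) => [[b [Pb Hab]]|Hn].
  + apply: (IH b Pb); have := Hb b Pb; lia.
  + exists a; split => // b Pb; rewrite leqNgt; apply/negP => Hlt; apply: Hn.
    by exists b.
Qed.

Section Free.
Variables (T : finType) (e : rel T) (f : T -> nat).
Hypotheses (esym : symmetric e) (eirr : irreflexive e) (finj : injective f).
Hypothesis Hfree : forall H, H \in CF -> ~ contains_pattern e f H.1 H.2.

Ltac adj := move=> [|[|[|[|?]]]] [|[|[|[|?]]]] //= _ _;
  rewrite /pat_adj !inE /= ?eirr //; try (by []); by rewrite esym.

Ltac uniq_tac := rewrite /= !inE !negb_or -?andbA;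
  repeat (apply/andP; split); by [|rewrite eq_sym].

Ltac rot_tac H := first [ exact H | apply: cw4_rot; exact H
  | apply: cw4_rot; apply: cw4_rot; exact H
  | apply: cw4_rot; apply: cw4_rot; apply: cw4_rot; exact H].

Lemma fne x y : x != y -> f x != f y.
Proof. by rewrite (inj_eq finj). Qed.

Lemma uniq_f s : uniq (map f s) -> uniq s.
Proof. by rewrite (map_inj_uniq finj). Qed.

Lemma adj_ne x y : e x y -> x != y.
Proof. by apply: contraTneq => ->; rewrite eirr. Qed.

Lemma no_tri a b c : e a b -> e b c -> e c a -> False.
Proof.
move=> ab bc ca.
have nab := adj_ne ab; have nbc := adj_ne bc; have nca := adj_ne ca.
have := fne nab; have := fne nbc; have := fne nca => H1 H2 H3.
have : cw (f a) (f b) (f c) || cw (f a) (f c) (f b) by rewrite /cw; lia.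
case/orP => H.
- apply: (Hfree (H:=(3, [:: (0,1);(1,2);(2,0)]))); first by rewrite inE eqxx.
  apply: (pattern_of_seq (s:=[:: a;b;c]) (x0:=a)) => //.
  + by uniq_tac.
  + exact/clockwise3.
  + adj.
- apply: (Hfree (H:=(3, [:: (0,1);(1,2);(2,0)]))); first by rewrite inE eqxx.
  apply: (pattern_of_seq (s:=[:: a;c;b]) (x0:=a)) => //.
  + by uniq_tac.
  + exact/clockwise3.
  + adj.
Qed.

Lemma six_orders (a b c d : nat) : a != b -> a != c -> a != d -> b != c -> b != d -> c != d ->
  [|| cw4 a b c d, cw4 a b d c, cw4 a c b d, cw4 a c d b, cw4 a d b c | cw4 a d c b].
Proof.
rewrite /cw4.
case: (ltngtP a b); case: (ltngtP a c); case: (ltngtP a d);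
case: (ltngtP b c); case: (ltngtP b d); case: (ltngtP c d) => //=; lia.
Qed.

Lemma no_c4 a b c d : e a b -> e b c -> e c d -> e d a -> a != c -> b != d -> False.
Proof.
move=> ab bc cd da nac nbd.
have nab := adj_ne ab; have nbc := adj_ne bc; have ncd := adj_ne cd; have nda := adj_ne da.
have ac : e a c = false by apply/negP => ac; apply: (no_tri ac cd da).
have bd : e b d = false by apply/negP => bd; apply: (no_tri bd da ab).
have nad : a != d by rewrite eq_sym.
have := six_orders (fne nab) (fne nac) (fne nad) (fne nbc) (fne nbd) (fne ncd).
have := fne nab; have := fne nac; have := fne nda; have := fne nbc; have := fne nbd; have := fne ncd.
move=> F1 F2 F3 F4 F5 F6.
case/or3P => [H|H|/or4P [H|H|H|H]].
- apply: (Hfree (H:=(4, [:: (0,1);(1,2);(2,3);(3,0)]))); first by rewrite !inE eqxx ?orbT.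
  apply: (pattern_of_seq (s:=[:: a;b;c;d]) (x0:=a)) => //.
  + by uniq_tac.
  + exact/clockwise4.
  + adj.
- apply: (Hfree (H:=(4, [:: (0,1);(1,3);(3,2);(2,0)]))); first by rewrite !inE eqxx ?orbT.
  apply: (pattern_of_seq (s:=[:: a;b;d;c]) (x0:=a)) => //.
  + by uniq_tac.
  + exact/clockwise4.
  + adj.
- apply: (Hfree (H:=(4, [:: (0,1);(1,3);(3,2);(2,0)]))); first by rewrite !inE eqxx ?orbT.
  apply: (pattern_of_seq (s:=[:: c;b;d;a]) (x0:=a)) => //.
  + by uniq_tac.
  + by apply/clockwise4; rot_tac H.
  + adj.
- apply: (Hfree (H:=(4, [:: (0,1);(1,3);(3,2);(2,0)]))); first by rewrite !inE eqxx ?orbT.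
  apply: (pattern_of_seq (s:=[:: c;d;b;a]) (x0:=a)) => //.
  + by uniq_tac.
  + by apply/clockwise4; rot_tac H.
  + adj.
- apply: (Hfree (H:=(4, [:: (0,1);(1,3);(3,2);(2,0)]))); first by rewrite !inE eqxx ?orbT.
  apply: (pattern_of_seq (s:=[:: a;d;b;c]) (x0:=a)) => //.
  + by uniq_tac.
  + exact/clockwise4.
  + adj.
- apply: (Hfree (H:=(4, [:: (0,1);(1,2);(2,3);(3,0)]))); first by rewrite !inE eqxx ?orbT.
  apply: (pattern_of_seq (s:=[:: a;d;c;b]) (x0:=a)) => //.
  + by uniq_tac.
  + exact/clockwise4.
  + adj.
Qed.

Lemma p4_sep a b c d : e a b -> e b c -> e c d ->
  e a c = false -> e b d = false -> e a d = false -> opp (f b) (f c) (f a) (f d).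
Proof.
move=> ab bc cd ac bd ad.
have nab := adj_ne ab; have nbc := adj_ne bc; have ncd := adj_ne cd.
have nac : a != c by apply: (contraTneq _ cd) => <-; rewrite ad.
have nbd : b != d by apply: (contraTneq _ ab) => ->; rewrite ad.
have nad : a != d by apply: (contraTneq _ cd) => <-; rewrite esym ac.
have := fne nab; have := fne nac; have := fne nad; have := fne nbc; have := fne nbd; have := fne ncd.
move=> F1 F2 F3 F4 F5 F6.
have := six_orders (fne nab) (fne nac) (fne nad) (fne nbc) (fne nbd) (fne ncd).
case/or3P => [H|H|/or4P [H|H|H|H]].
- exfalso; apply: (Hfree (H:=(4, [:: (0,1);(1,2);(2,3)]))); first by rewrite !inE eqxx ?orbT.
  apply: (pattern_of_seq (s:=[:: a;b;c;d]) (x0:=a)) => //.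
  + by uniq_tac.
  + exact/clockwise4.
  + adj.
- exact: opp_abdc.
- exfalso; apply: (Hfree (H:=(4, [:: (2,0);(0,3);(3,1)]))); first by rewrite !inE eqxx ?orbT.
  apply: (pattern_of_seq (s:=[:: b;d;a;c]) (x0:=a)) => //.
  + by uniq_tac.
  + by apply/clockwise4; rot_tac H.
  + adj.
- exact: opp_acdb.
- exfalso; apply: (Hfree (H:=(4, [:: (2,0);(0,3);(3,1)]))); first by rewrite !inE eqxx ?orbT.
  apply: (pattern_of_seq (s:=[:: c;a;d;b]) (x0:=a)) => //.
  + by uniq_tac.
  + by apply/clockwise4; rot_tac H.
  + adj.
- exfalso; apply: (Hfree (H:=(4, [:: (0,1);(1,2);(2,3)]))); first by rewrite !inE eqxx ?orbT.
  apply: (pattern_of_seq (s:=[:: d;c;b;a]) (x0:=a)) => //.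
  + by uniq_tac.
  + by apply/clockwise4; rot_tac H.
  + adj.
Qed.

Definition isCyc (x0 : T) (c : seq T) :=
  [/\ uniq c, 3 <= size c &
      forall k, k < size c -> e (nth x0 c k) (nth x0 c (k.+1 %% size c))].

Lemma cycle_isCyc x0 c : uniq c -> 3 <= size c -> cycle e c -> isCyc x0 c.
Proof.
move=> U S; case: c U S => [//|x s] U S /(pathP x0) H; split => // k Hk.
have := H k; rewrite size_rcons => /(_ Hk).
rewrite /= in Hk *.
have -> : nth x0 (x :: rcons s x) k = nth x0 (x :: s) k.
  by rewrite -rcons_cons nth_rcons /= Hk.
case: (ltngtP k (size s)) => [lt|gt|->].
- by rewrite modn_small // nth_rcons lt.
- by move: Hk; rewrite ltnS leqNgt gt.
- by rewrite modnn nth_rcons ltnn eqxx.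
Qed.

Lemma chord_short x0 c i j : isCyc x0 c -> i < j -> j < size c -> i + 2 <= j ->
  j + 2 <= i + size c -> e (nth x0 c i) (nth x0 c j) ->
  exists c', isCyc x0 c' /\ size c' < size c.
Proof.
move=> [U S3 H] Hij Hj H2 H3 Ech.
set L := size c in Hj H2 H3 H *.
set n := L - j + i + 1.
pose idx k := if k <= i then k else k + j - i - 1.
have idxL k : k < n -> idx k < L by rewrite /idx; case: ifP; lia.
exists (mkseq (fun k => nth x0 c (idx k)) n); split; last by rewrite size_mkseq /n; lia.
split; rewrite ?size_mkseq.
- rewrite /mkseq map_inj_in_uniq ?iota_uniq // => a b.
  rewrite !mem_iota /= !add0n => Ha Hb /eqP.
  rewrite nth_uniq ?idxL // => /eqP.
  by rewrite /idx; case: ifP; case: ifP; lia.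
- rewrite /n; lia.
- move=> k Hk.
  have Hk1 : k.+1 %% n < n by rewrite ltn_pmod //; lia.
  rewrite !nth_mkseq //.
  case: (eqVneq k i) => [->|Hki].
  + have -> : idx i = i by rewrite /idx leqnn.
    have -> : i.+1 %% n = i.+1 by rewrite modn_small //; rewrite /n; lia.
    have -> : idx i.+1 = j by rewrite /idx ltnn; lia.
    exact: Ech.
  + have := H (idx k) (idxL k Hk).
    have nE : n = L - j + i + 1 by [].
    have [lt|eqn] : k.+1 < n \/ k.+1 = n by lia.
    * have -> : (idx k).+1 %% L = (idx k).+1.
        by apply: modn_small; move: Hki; rewrite /idx; case: ifP; lia.
      rewrite (modn_small lt).
      have -> : (idx k).+1 = idx k.+1; last by [].
      by move: Hki; rewrite /idx; case: ifP; case: ifP; lia.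
    * rewrite eqn modnn.
      have -> : (idx k).+1 = L.
        by move: Hki; rewrite /idx; case: ifP; lia.
      by rewrite modnn.
Qed.


Lemma no_isCyc x0 : forall n c, size c <= n -> isCyc x0 c -> False.
Proof.
elim=> [|n IH] c Hs [U S3 H]; first by move: S3 Hs; lia.
set L := size c in Hs S3 H.
have NC : forall i j, i < j -> j < L -> i + 2 <= j -> j + 2 <= i + L ->
    e (nth x0 c i) (nth x0 c j) = false.
  move=> i j Hij Hj H2 H3; apply/negP => Ech.
  have [c' [Hc' Hs']] := chord_short (And3 U S3 H) Hij Hj H2 H3 Ech.
  by apply: (IH c' _ Hc'); move: Hs Hs'; rewrite -/L; lia.
have D : forall i j, i < L -> j < L -> (nth x0 c i == nth x0 c j) = (i == j).
  by move=> i j Hi Hj; rewrite nth_uniq.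
have Ed : forall a, a.+1 < L -> e (nth x0 c a) (nth x0 c a.+1).
  by move=> a Ha; have := H a (ltnW Ha); rewrite modn_small.
have Elast : e (nth x0 c L.-1) (nth x0 c 0).
  by have := H L.-1 ltac:(lia); rewrite prednK ?modnn //; lia.
have [L3|[L4|L5]] : L = 3 \/ L = 4 \/ 5 <= L by lia.
- apply: (@no_tri (nth x0 c 0) (nth x0 c 1) (nth x0 c 2)).
  + by apply: Ed; rewrite L3.
  + by apply: Ed; rewrite L3.
  + by move: Elast; rewrite L3.
- apply: (@no_c4 (nth x0 c 0) (nth x0 c 1) (nth x0 c 2) (nth x0 c 3)).
  + by apply: Ed; rewrite L4.
  + by apply: Ed; rewrite L4.
  + by apply: Ed; rewrite L4.
  + by move: Elast; rewrite L4.
  + by rewrite D ?L4.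
  + by rewrite D ?L4.
pose x k := f (nth x0 c k).
have sep : forall k, k.+3 < L -> opp (x k.+1) (x k.+2) (x k) (x k.+3).
  move=> k Hk; apply: p4_sep.
  + by apply: Ed; lia.
  + by apply: Ed; lia.
  + by apply: Ed; lia.
  + by apply: NC; lia.
  + by apply: NC; lia.
  + by apply: NC; lia.
have sepw : opp (x L.-2) (x L.-1) (x (L - 3)) (x 0).
  apply: p4_sep.
  + have -> : L.-2 = (L - 3).+1 by lia. by apply: Ed; lia.
  + have -> : L.-1 = L.-2.+1 by lia. by apply: Ed; lia.
  + exact: Elast.
  + by apply: NC; lia.
  + by rewrite esym; apply: NC; lia.
  + by rewrite esym; apply: NC; lia.
have N : forall k, k + 3 <= L -> forall z, opp (x k.+1) (x k.+2) (x k) z ->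
    opp (x 1) (x 2) (x 0) z.
  elim=> [//|k IHk] Hk z Hz.
  apply: (IHk ltac:(lia)); apply: (opp_arc (w := x k.+3)) => //.
  by apply: sep; lia.
have := N (L - 3) ltac:(lia) (x 0).
have -> : (L - 3).+1 = L.-2 by lia.
have -> : L.-2.+1 = L.-1 by lia.
by rewrite opp_self => /(_ sepw).
Qed.

Lemma no_cycle (c : seq T) : uniq c -> 3 <= size c -> cycle e c -> False.
Proof.
case: c => [//|x0 s] U S C.
exact: (@no_isCyc x0 (size (x0 :: s)) (x0 :: s) (leqnn _) (cycle_isCyc x0 U S C)).
Qed.

Lemma deg_ne1 y a b : e y a -> e y b -> a != b -> deg e y != 1.
Proof.
move=> ya yb nab.
have : #|[set a; b]| <= deg e y.
  apply: subset_leq_card; apply/subsetP => z; rewrite !inE => /orP[] /eqP ->;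
  by [].
by rewrite cards2 nab; case: (deg e y) => [|[|]].
Qed.

Lemma other_nb y v : deg e y != 1 -> e y v -> exists w, e y w /\ w != v.
Proof.
move=> dy yv.
case: (set_0Vmem (nbhd e y :\ v)) => [H0|[w]]; last first.
  by rewrite in_setD1 /nbhd inE => /andP[wv yw]; exists w.
exfalso; move/negP: dy; apply.
have sub : nbhd e y \subset [set v] by rewrite -setD_eq0 H0.
have : nbhd e y = [set v].
  apply/eqP; rewrite eqEcard sub cards1 card_gt0; apply/set0Pn; exists v.
  by rewrite inE.
by rewrite /deg => ->; rewrite cards1.
Qed.

Lemma middle3 (v a b c : nat) : v != a -> v != b -> v != c -> a != b -> a != c -> b != c ->
  [|| opp v b a c, opp v a b c | opp v c a b].
Proof. rewrite /opp /cw; ordtac4 v a b c. Qed.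

Lemma opp_contra u w a c d : opp u w a c -> opp u w a d -> opp u w c d -> False.
Proof. rewrite /opp; case E1: (cw u a w); case E2: (cw u c w); move: E1 E2; rewrite /cw /=; lia. Qed.

Lemma no_three v a b c : e v a -> e v b -> e v c -> a != b -> a != c -> b != c ->
  deg e a != 1 -> deg e b != 1 -> deg e c != 1 -> False.
Proof.
move=> va vb vc nab nac nbc da db dc.
have Q : forall x, e v x -> deg e x != 1 -> exists x', forall y, e v y -> x != y ->
    opp (f v) (f x) (f y) (f x').
  move=> x vx dx.
  have [x' [xx' nx'v]] := other_nb (v:=v) dx ltac:(by rewrite esym).
  exists x' => y vy nxy; apply: p4_sep.
  - by rewrite esym.
  - exact: vx.
  - exact: xx'.
  - by apply/negP => yx; apply: (no_tri (c:=v) yx) => //; rewrite esym.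
  - by apply/negP => vx'; apply: (no_tri (c:=x) vx'); rewrite esym.
  - apply/negP => yx'; apply: (no_c4 (a:=y) (b:=v) (c:=x) (d:=x')) => //.
    + by rewrite esym.
    + by rewrite esym.
    + by rewrite eq_sym.
    + by rewrite eq_sym.
have nva := adj_ne va; have nvb := adj_ne vb; have nvc := adj_ne vc.
have := middle3 (fne nva) (fne nvb) (fne nvc) (fne nab) (fne nac) (fne nbc).
case/or3P => M.
- have [b' Hb] := Q b vb db.
  apply: (opp_contra M (Hb a va _) (Hb c vc nbc)); by rewrite eq_sym.
- have [a' Ha] := Q a va da.
  exact: (opp_contra M (Ha b vb nab) (Ha c vc nac)).
- have [c' Hc] := Q c vc dc.
  apply: (opp_contra M (Hc a va _) (Hc b vb _)); by rewrite eq_sym.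
Qed.


Section Comp.
Variable x : T.
Let C := component e x.

Lemma inC z : (z \in C) = connect e x z.
Proof. by rewrite /C /component inE. Qed.

Lemma inC_step z w : z \in C -> e z w -> w \in C.
Proof. by rewrite !inC => xz zw; apply: connect_trans xz (connect1 zw). Qed.

Lemma to_induced y p : y \in C -> path e y p -> path (induced e C) y p.
Proof.
elim: p y => //= z p IH y Cy /andP[yz pz].
have Cz := inC_step Cy yz.
by rewrite /induced yz Cy Cz /=; apply: IH.
Qed.

Lemma induced_sym (A : {set T}) : symmetric (induced e A).
Proof. by move=> a b; rewrite /induced esym; case: (a \in A); case: (b \in A); rewrite ?andbF. Qed.

Lemma comp_conn u v : u \in C -> v \in C -> connect (induced e C) u v.
Proof.
have H : forall w, w \in C -> connect (induced e C) x w.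
  move=> w; rewrite inC => /connectP [p pp ->].
  apply/connectP; exists p => //; apply: to_induced pp.
  by rewrite inC connect0.
move=> Cu Cv; apply: connect_trans (H v Cv).
by rewrite (sym_connect_sym (@induced_sym C)); apply: H.
Qed.

Lemma comp_tree : induces_tree e C.
Proof.
split.
- by apply/set0Pn; exists x; rewrite inC connect0.
- exact: comp_conn.
- by case=> c [U S Cy _]; apply: (no_cycle U S Cy).
Qed.

Let S := nonleaves e C.

Lemma inS z : (z \in S) = (z \in C) && (deg e z != 1).
Proof. by rewrite /S /nonleaves inE. Qed.

Lemma pathS q u : u \in S -> uniq (u :: q) -> path e u q -> last u q \in S ->
  path (induced e S) u q.
Proof.
elim: q u => [//|y q IH] u Su U /= /andP[uy pq] Sl.
have Sy : y \in S.
  case: q IH U pq Sl => [|z q] IH U pq Sl; first by [].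
  rewrite inS; apply/andP; split.
    by apply: (inC_step _ uy); move: Su; rewrite inS => /andP[].
  apply: (deg_ne1 (a:=u) (b:=z)); first by rewrite esym.
    by case/andP: pq.
  by apply: (contraTneq _ U) => ->; rewrite /= !inE eqxx /= ?orbT.
rewrite /induced uy Su Sy /=; apply: IH => //.
by case/andP: U.
Qed.

Lemma S_conn u w : u \in S -> w \in S -> connect (induced e S) u w.
Proof.
move=> Su Sw.
have cuw : connect e u w.
  move: Su Sw; rewrite !inS !inC => /andP[xu _] /andP[xw _].
  by apply: connect_trans xw; rewrite (sym_connect_sym esym).
case/connectP: cuw => p pp Ew; subst w.
move: Sw; case: (shortenP pp) => p' pp' Up' _ Sl.
apply/connectP; exists p' => //; exact: pathS.
Qed.


Lemma trichot j (r : seq T) : j < (size r).+1 -> j = 0 \/ j = size r \/ (0 < j /\ j < size r).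
Proof. lia. Qed.
Lemma L1 j n : 0 < j -> j < n -> j.-1.+1 < n.+1. Proof. lia. Qed.
Lemma L2 j n : j < n -> j.+1 < n.+1. Proof. lia. Qed.
Lemma L3 j n : 0 < j -> j < n -> j.-1 < n.+1. Proof. lia. Qed.
Lemma L4 j : 0 < j -> (j.-1 == j.+1) = false. Proof. lia. Qed.

Definition Vp (yr : T * seq T) :=
  [&& uniq (yr.1 :: yr.2), all (fun z => z \in S) (yr.1 :: yr.2) & path e yr.1 yr.2].

Lemma Vp_bound yr : Vp yr -> size yr.2 <= #|T|.
Proof.
case/and3P => U _ _.
have := max_card (mem (yr.1 :: yr.2)); rewrite (card_uniqP U) /=; lia.
Qed.

Lemma path_nth y r : path e y r -> forall k, k.+1 < size (y :: r) ->
  e (nth y (y :: r) k) (nth y (y :: r) k.+1).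
Proof. by move/(pathP y) => H k Hk; apply: H. Qed.

Lemma noncons y r i j : uniq (y :: r) -> path e y r -> i.+1 < j -> j < size (y :: r) ->
  e (nth y (y :: r) i) (nth y (y :: r) j) -> False.
Proof.
move=> U pp Hij Hj Eij.
have E := path_nth pp.
pose n := j - i + 1.
pose c := mkseq (fun k => nth y (y :: r) (i + k)) n.
apply: (@no_isCyc y (size c) c (leqnn _)).
split; rewrite ?size_mkseq.
- rewrite /c /mkseq map_inj_in_uniq ?iota_uniq // => a b.
  rewrite !mem_iota /= !add0n => Ha Hb /eqP.
  have H1 : i + a < size (y :: r) by rewrite /n in Ha; lia.
  have H2 : i + b < size (y :: r) by rewrite /n in Hb; lia.
  by rewrite nth_uniq // => /eqP; lia.
- rewrite /n; lia.
- move=> k Hk; rewrite !nth_mkseq //; last by rewrite ltn_pmod //; lia.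
  have [lt|eqn] : k.+1 < n \/ k.+1 = n by lia.
  + rewrite (modn_small lt) addnS; apply: E; rewrite /n in lt; apply: leq_trans Hj; lia.
  + rewrite eqn modnn addn0; rewrite esym.
    have -> : i + k = j by rewrite /n in eqn; lia.
    exact: Eij.
Qed.

Lemma spine_path : induces_path e S.
Proof.
case: (set_0Vmem S) => [S0 | [y0 Sy0]].
  exists [::]; split => //; try (by apply/setP => z; rewrite S0 !inE).
  by move=> u v; rewrite S0 inE.
have V0 : Vp (y0, [::]) by rewrite /Vp /= Sy0.
have [[y r] [Vyr Mx]] := exists_max Vp_bound V0.
case/and3P: (Vyr) => /= U AS pp.
set p := y :: r.
have E := path_nth pp.
have AS1 : all (fun z => z \in S) p by case/and3P: Vyr.
have U1 : uniq p by case/and3P: Vyr.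
have Sp : forall z, z \in p -> z \in S by move=> z zp; exact: (allP AS1 z zp).
have closure : forall z w, z \in S -> w \in p -> e z w -> z \in p.
  move=> z w Sz wp ezw; apply/negPn/negP => zp.
  have jlt : index w p < size p by rewrite index_mem.
  have wE : nth y p (index w p) = w by rewrite nth_index.
  have [j0|[jl|jm]] : index w p = 0 \/ index w p = size r \/
      (0 < index w p /\ index w p < size r) by exact: trichot jlt.
  - have : Vp (z, y :: r).
      rewrite /Vp /= Sz AS -/p zp U /=.
      have yw : y = w by move: wE; rewrite j0.
      by rewrite pp andbT yw.
    by move/Mx => /=; rewrite ltnn.
  - have : Vp (y, rcons r z).
      have U' : uniq (y :: rcons r z) by rewrite -rcons_cons rcons_uniq zp U1.
      have A' : all (fun z0 => z0 \in S) (y :: rcons r z).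
        by rewrite -rcons_cons all_rcons Sz AS1.
      have P' : path e y (rcons r z).
        by rewrite rcons_path pp /= (last_nth y) -/p -jl wE esym.
      by rewrite /Vp U' A' P'.
    by move/Mx => /=; rewrite size_rcons ltnn.
  - case: jm => j1 j2.
    set j := index w p in j1 j2 wE.
    have Ea := E j.-1 (L1 j1 j2).
    have Eb := E j (L2 j2).
    rewrite prednK // wE in Ea; rewrite wE in Eb.
    have ap : nth y p j.-1 \in p by rewrite mem_nth // (L3 j1 j2).
    have bp : nth y p j.+1 \in p by rewrite mem_nth // (L2 j2).
    apply: (no_three (v:=w) (a:=nth y p j.-1) (b:=nth y p j.+1) (c:=z)).
    + by rewrite esym.
    + exact: Eb.
    + by rewrite esym.
    + by rewrite nth_uniq // ?(L4 j1) ?(L3 j1 j2) ?(L2 j2).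
    + by apply: contraNneq zp => <-.
    + by apply: contraNneq zp => <-.
    + by have := Sp _ ap; rewrite inS => /andP[].
    + by have := Sp _ bp; rewrite inS => /andP[].
    + by move: Sz; rewrite inS => /andP[].
have allin : forall u, u \in S -> u \in p.
  move=> u Su.
  have := S_conn (Sp y (mem_head _ _)) Su.
  case/connectP => q pq ->.
  have cl : forall q z, z \in p -> path (induced e S) z q -> last z q \in p.
    elim=> [//|z' q' IH] z zp /= /andP[izz' pq'].
    apply: IH pq'; move: izz'; rewrite /induced => /and3P[ezz' Sz Sz'].
    by apply: (closure z' z) => //; rewrite esym.
  exact: cl (mem_head y r) pq.
exists p; split => //.
- apply/setP => u; rewrite inE; apply/idP/idP; [exact: allin | exact: Sp].
- move=> u v Su Sv.
  have up := allin u Su; have vp := allin v Sv.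
  rewrite /consec up vp !andTb.
  have uE : nth y p (index u p) = u by rewrite nth_index.
  have vE : nth y p (index v p) = v by rewrite nth_index.
  have ui : index u p < size p by rewrite index_mem.
  have vi : index v p < size p by rewrite index_mem.
  apply/idP/idP.
  + move=> euv; apply/negPn/negP; rewrite negb_or => /andP[n1 n2].
    have nuv : index u p != index v p.
      apply: contraTneq euv => Eq; rewrite -uE Eq vE eirr //.
    case: (ltngtP (index u p) (index v p)) => [lt|gt|eq]; last by rewrite eq eqxx in nuv.
    * apply: (noncons U pp (i:=index u p) (j:=index v p)); first by rewrite ltn_neqAle n1 lt.
        done.
      by rewrite uE vE.
    * apply: (noncons U pp (i:=index v p) (j:=index u p)); first by rewrite ltn_neqAle n2 gt.
        done.
      by rewrite uE vE esym.
  + case/orP => /eqP H.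
    * by rewrite -uE -vE -H; apply: E; rewrite H.
    * by rewrite -uE -vE -H esym; apply: E; rewrite H.
Qed.

End Comp.

Lemma free_cat : caterpillar_forest e.
Proof. by move=> x; split; [exact: comp_tree | exact: spine_path]. Qed.

End Free.


Definition P (B k : nat) (l : bool) :=
  if odd k (+) l then B - (if l then (2 * k).+1 else 2 * k)
  else (if l then (2 * k).+1 else 2 * k).

Lemma opp_lin u v w z : (u < z < v \/ v < z < u) -> ~ (u < w < v \/ v < w < u) ->
  w != u -> w != v -> opp u v w z.
Proof.
move=> H1 H2 H3 H4; rewrite /opp; case E: (cw u w v); move: E; rewrite /cw; lia.
Qed.

Lemma opp_sym u v w z : u != v -> w != u -> w != v -> z != u -> z != v ->
  opp v u z w -> opp u v w z.
Proof. rewrite /opp /cw; ordtac4 u v w z. Qed.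

Lemma pat4_contra a b c d : cw4 a b c d -> opp b c a d -> False.
Proof. rewrite /opp /cw /cw4; ordtac4 a b c d. Qed.

Lemma pat5_contra w x y z : cw4 w x y z -> opp w z y x -> False.
Proof. rewrite /opp /cw /cw4; ordtac4 w x y z. Qed.

Lemma core N i ka kd (la ld : bool) :
  i.+1 < N ->
  (la = false /\ ka.+1 = i) \/ (la = true /\ ka = i) ->
  (ld = false /\ kd = i.+2 /\ i.+2 < N) \/ (ld = true /\ kd = i.+1) ->
  opp (P (4 * N + 4) i false) (P (4 * N + 4) i.+1 false)
          (P (4 * N + 4) ka la) (P (4 * N + 4) kd ld) /\
  [/\ P (4 * N + 4) ka la != P (4 * N + 4) i false,
      P (4 * N + 4) ka la != P (4 * N + 4) i.+1 false,
      P (4 * N + 4) kd ld != P (4 * N + 4) i false,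
      P (4 * N + 4) kd ld != P (4 * N + 4) i.+1 false &
      P (4 * N + 4) i false != P (4 * N + 4) i.+1 false].
Proof.
move=> HN [[-> Ea]|[-> ->]] [[-> [-> H2]]|[-> ->]]; try subst i;
rewrite /P /= ?oddS; case: (odd _) => /=;
(split; [apply: opp_lin; lia | split; lia]).
Qed.

Section Build.
Variables (T : finType) (e : rel T).
Hypotheses (esym : symmetric e) (eirr : irreflexive e).
Hypothesis HC : caterpillar_forest e.

Definition spP (C : {set T}) (p : seq T) : Prop :=
  [/\ uniq p, nonleaves e C = [set x in p] &
      forall u v, u \in nonleaves e C -> v \in nonleaves e C -> e u v = consec p u v].

Definition sp (C : {set T}) : seq T := epsilon (inhabits [::]) (spP C).

Lemma sp_spec x : spP (component e x) (sp (component e x)).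
Proof. apply: epsilon_spec; exact: (HC x).2. Qed.

Definition ix (x : T) : nat :=
  if x \in sp (component e x) then index x (sp (component e x))
  else find (e x) (sp (component e x)).
Definition lf (x : T) : bool := x \notin sp (component e x).
Definition Bn := 4 * #|T| + 4.
Definition pos x := P Bn (ix x) (lf x).
Definition fv (x : T) : nat :=
  ((enum_rank (component e x) : nat) * Bn.+1 + pos x) * #|T| + enum_rank x.

Lemma fv_inj : injective fv.
Proof.
move=> x y H.
have : fv x %% #|T| = fv y %% #|T| by rewrite H.
rewrite /fv !modnMDl !modn_small ?ltn_ord // => /val_inj.
exact: enum_rank_inj.
Qed.

Lemma size_sp x : size (sp (component e x)) <= #|T|.
Proof.
have [U _ _] := sp_spec x.
by rewrite -(card_uniqP U) max_card.
Qed.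

Lemma pos_le x : pos x <= Bn.
Proof.
have : ix x <= #|T|.
  apply: leq_trans (size_sp x); rewrite /ix; case: ifP => _.
    exact: index_size.
  exact: find_size.
rewrite /pos /P /Bn; case: (odd _ (+) _); case: (lf x); lia.
Qed.

Lemma fv_lt x y : component e x = component e y -> pos x < pos y -> fv x < fv y.
Proof.
move=> Cxy lt; rewrite /fv Cxy.
set A := _ * Bn.+1.
have rx := ltn_ord (enum_rank x).
apply: (@leq_trans ((A + pos x).+1 * #|T|)).
  by rewrite mulSn [X in _ < X]addnC ltn_add2l.
apply: leq_trans (leq_addr _ _); rewrite leq_mul2r; apply/orP; right.
by move: lt; clear; lia.
Qed.

Lemma ltE x y : component e x = component e y -> pos x != pos y ->
  (fv x < fv y) = (pos x < pos y).
Proof.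
move=> Cxy ne; case: (ltngtP (pos x) (pos y)) => h.
- exact: fv_lt.
- by apply/negbTE; rewrite -leqNgt ltnW // fv_lt.
- by rewrite h eqxx in ne.
Qed.

Lemma comp_eq x y : e x y -> component e x = component e y.
Proof.
move=> xy; apply/setP => z; rewrite !inE; apply/idP/idP => H.
- apply: connect_trans H; apply: connect1; by rewrite esym.
- exact: connect_trans (connect1 xy) H.
Qed.

Lemma in_sp x z : z \in component e x -> (z \in sp (component e x)) = (deg e z != 1).
Proof.
have [_ Seq _] := sp_spec x.
move=> Cz; move/setP: Seq => /(_ z).
rewrite /nonleaves [in LHS]inE Cz /= => ->.
by rewrite inE.
Qed.

Lemma leaf_find x y : e x y -> deg e x == 1 -> forall p, find (e x) p = index y p.
Proof.
move=> xy /cards1P [z Hz] p.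
have yx : y \in nbhd e x by rewrite inE.
have yz : y = z by move: yx; rewrite Hz inE => /eqP.
apply: eq_find => w; have : (w \in nbhd e x) = (w == y) by rewrite Hz inE yz.
by rewrite inE.
Qed.

Lemma memC x : x \in component e x.
Proof. by rewrite inE connect0. Qed.

Lemma p4_or a b c d : e a b -> e b c -> e c d ->
  e a c = false -> e b d = false -> e a d = false ->
  index c (sp (component e b)) = (index b (sp (component e b))).+1 ->
  opp (pos b) (pos c) (pos a) (pos d) /\
  [/\ pos a != pos b, pos a != pos c, pos d != pos b, pos d != pos c & pos b != pos c].
Proof.
move=> ab bc cd ac bd ad Hbc.
have nac : a != c by apply: (contraTneq _ cd) => <-; rewrite ad.
have nbd : b != d by apply: (contraTneq _ ab) => ->; rewrite ad.
have Ca : component e a = component e b by apply: comp_eq.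
have Cc : component e c = component e b by symmetry; apply: comp_eq.
have Cd : component e d = component e b by rewrite -Cc; symmetry; apply: comp_eq.
have [U Seq Hcons] := sp_spec b.
set C := component e b in Ca Cc Cd Seq Hcons Hbc.
set p := sp C in U Seq Hcons Hbc.
have inC : forall z, component e z = C -> z \in C.
  by move=> z <-; apply: memC.
have inp : forall z, component e z = C -> (z \in p) = (deg e z != 1).
  by move=> z Hz; rewrite /p -Hz; apply: in_sp; rewrite Hz inC.
have ixE : forall z, component e z = C ->
    ix z = if z \in p then index z p else find (e z) p.
  by move=> z Hz; rewrite /ix Hz.
have lfE : forall z, component e z = C -> lf z = (z \notin p).
  by move=> z Hz; rewrite /lf Hz.
have bp : b \in p.
  by rewrite inp //; apply: (deg_ne1 (a:=a) (b:=c)) => //; rewrite esym.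
have cp : c \in p.
  by rewrite (inp c Cc); apply: (deg_ne1 (a:=b) (b:=d)) => //; rewrite esym.
have sz := size_sp b; rewrite -/C -/p in sz.
have cl : index c p < size p by rewrite index_mem.
have Hcs : forall u v, u \in p -> v \in p -> e u v = consec p u v.
  by move=> u v up vp; apply: Hcons; rewrite Seq inE.
have idx_inj : forall u v, u \in p -> v \in p -> index u p = index v p -> u = v.
  move=> u v up vp H; by rewrite -(nth_index u up) H nth_index.
set i := index b p in Hbc.
have Ha : (lf a = false /\ (ix a).+1 = i) \/ (lf a = true /\ ix a = i).
  rewrite (lfE a Ca) (ixE a Ca); case ap: (a \in p) => /=.
  - left; split => //.
    have := Hcs a b ap bp; rewrite ab /consec ap bp /= => /(@Logic.eq_sym bool)/orP [/eqP //|/eqP H].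
    by exfalso; move/negP: nac; apply; apply/eqP; apply: idx_inj => //; rewrite Hbc.
  - right; split => //; apply: leaf_find => //.
    by move: ap; rewrite inp // => /negbT; rewrite negbK.
have Hd : (lf d = false /\ ix d = i.+2 /\ i.+2 < #|T|) \/ (lf d = true /\ ix d = i.+1).
  rewrite (lfE d Cd) (ixE d Cd); case dp: (d \in p) => /=.
  - left; split => //.
    have := Hcs c d cp dp; rewrite cd /consec cp dp /= => /(@Logic.eq_sym bool)/orP [/eqP H|/eqP H]; last first.
      by exfalso; move/negP: nbd; apply; apply/eqP; apply: idx_inj => //; apply: succn_inj; rewrite H.
    rewrite -H Hbc; split => //.
    have : index d p < size p by rewrite index_mem.
    by rewrite -H Hbc; move=> h; apply: leq_trans h sz.
  - right; split => //; rewrite -Hbc; apply: leaf_find; first by rewrite esym.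
    by move: dp; rewrite (inp d Cd) => /negbT; rewrite negbK.
have HN : i.+1 < #|T| by rewrite -Hbc; apply: leq_trans cl sz.
have [Hop [D1 D2 D3 D4 D5]] := core HN Ha Hd.
have pb : pos b = P Bn i false.
  by rewrite /pos (ixE b erefl) (lfE b erefl) bp.
have pc : pos c = P Bn i.+1 false.
  by rewrite /pos (ixE c Cc) (lfE c Cc) cp Hbc.
have pa : pos a = P Bn (ix a) (lf a) by [].
have pd : pos d = P Bn (ix d) (lf d) by [].
by rewrite pa pd pb pc; split => //; split.
Qed.

Lemma mid_in a b c : e a b -> e b c -> a != c -> b \in sp (component e b).
Proof.
move=> ab bc nac; rewrite in_sp ?memC //.
by apply: (deg_ne1 (a:=a) (b:=c)) => //; rewrite esym.
Qed.

Lemma p4_pos a b c d : e a b -> e b c -> e c d ->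
  e a c = false -> e b d = false -> e a d = false ->
  opp (pos b) (pos c) (pos a) (pos d) /\
  [/\ pos a != pos b, pos a != pos c, pos d != pos b, pos d != pos c & pos b != pos c].
Proof.
move=> ab bc cd ac bd ad.
have nac : a != c by apply: (contraTneq _ cd) => <-; rewrite ad.
have nbd : b != d by apply: (contraTneq _ ab) => ->; rewrite ad.
have bp := mid_in ab bc nac.
have Cc : component e c = component e b by symmetry; apply: comp_eq.
have cp : c \in sp (component e b).
  by rewrite -Cc; apply: (mid_in bc cd).
have [U Seq Hcons] := sp_spec b.
have := Hcons b c; rewrite Seq !inE bp cp bc => /(_ isT isT).
rewrite /consec bp cp /= => /(@Logic.eq_sym bool)/orP [/eqP H|/eqP H].
- by apply: p4_or => //; rewrite H.
- have := @p4_or d c b a; rewrite Cc.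
  case.
  + by rewrite esym.
  + by rewrite esym.
  + by rewrite esym.
  + by rewrite esym.
  + by rewrite esym.
  + by rewrite esym.
  + by rewrite H.
  move=> Hop [D1 D2 D3 D4 D5]; split; last by split; rewrite // eq_sym.
  by apply: opp_sym => //; rewrite eq_sym.
Qed.

Lemma p4_fv a b c d : e a b -> e b c -> e c d ->
  e a c = false -> e b d = false -> e a d = false ->
  opp (fv b) (fv c) (fv a) (fv d).
Proof.
move=> ab bc cd ac bd ad.
have [Hop [D1 D2 D3 D4 D5]] := p4_pos ab bc cd ac bd ad.
have Ca : component e a = component e b by apply: comp_eq.
have Cc : component e c = component e b by symmetry; apply: comp_eq.
have Cd : component e d = component e b by rewrite -Cc; symmetry; apply: comp_eq.
have L : forall x y, component e x = component e b -> component e y = component e b ->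
    pos x != pos y -> (fv x < fv y) = (pos x < pos y).
  by move=> x y Hx Hy; apply: ltE; rewrite Hx Hy.
have E0 : component e b = component e b by [].
move: Hop; rewrite /opp /cw.
rewrite (L b a E0 Ca) 1?eq_sym // (L a c Ca Cc) // (L c b Cc E0) 1?eq_sym //.
rewrite (L c d Cc Cd) 1?eq_sym // (L d b Cd E0) // (L b c E0 Cc) //.
rewrite (L b d E0 Cd) 1?eq_sym // (L d c Cd Cc) //.
Qed.

Lemma no_cyc_comp x (c : seq T) : uniq c -> 3 <= size c -> cycle e c ->
  all (fun z => z \in component e x) c -> False.
Proof.
move=> U S Cy A; have [[_ _ Hn] _] := HC x; apply: Hn.
by exists c; split.
Qed.

Lemma conn_in x y : connect e x y -> y \in component e x.
Proof. by rewrite inE. Qed.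

Ltac getadj Ads i j H := have H := Ads i j erefl erefl; rewrite /pat_adj !inE /= in H.

Lemma no_pattern H : H \in CF -> ~ contains_pattern e fv H.1 H.2.
Proof.
rewrite /CF !inE => /orP [/eqP->|/orP [/eqP->|/orP[/eqP->|/orP[/eqP->|/eqP->]]]] /=;
  case=> g [gi Cw Ad];
  have [s [U Sz Cws Ads]] := seq_of_pattern (g ord0) (ex_intro _ g (And3 gi Cw Ad)).
- case: s U Sz Cws Ads => [|a [|b [|c [|? ?]]]] //= U _ Cws Ads.
  getadj Ads 0 1 ab; getadj Ads 1 2 bc; getadj Ads 2 0 ca.
  apply: (no_cyc_comp (x:=a) (c:=[:: a; b; c])) => //=.
  + by rewrite ab bc ca.
  + have ac' : e a c by rewrite esym.
    by rewrite memC (conn_in (connect1 ab)) (conn_in (connect1 ac')).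
- case: s U Sz Cws Ads => [|a [|b [|c [|d [|? ?]]]]] //= U _ Cws Ads.
  getadj Ads 0 1 ab; getadj Ads 1 2 bc; getadj Ads 2 3 cd; getadj Ads 3 0 da.
  apply: (no_cyc_comp (x:=a) (c:=[:: a; b; c; d])) => //=.
  + by rewrite ab bc cd da.
  + have ad' : e a d by rewrite esym.
    rewrite memC (conn_in (connect1 ab)) (conn_in (connect1 ad')).
    by rewrite (conn_in (connect_trans (connect1 ab) (connect1 bc))).
- case: s U Sz Cws Ads => [|a [|b [|c [|d [|? ?]]]]] //= U _ Cws Ads.
  getadj Ads 0 1 ab; getadj Ads 1 3 bd; getadj Ads 3 2 dc; getadj Ads 2 0 ca.
  have P1 : perm_eq [:: d; c] [:: c; d] by rewrite (perm_catC [:: d] [:: c]) perm_refl.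
  have P2 : perm_eq [:: a; b; d; c] [:: a; b; c; d] by rewrite !perm_cons.
  have U' : uniq [:: a; b; d; c] by rewrite (perm_uniq P2).
  apply: (no_cyc_comp (x:=a) (c:=[:: a; b; d; c]) U') => //=.
  + by rewrite ab bd dc ca.
  + have ac' : e a c by rewrite esym.
    rewrite memC (conn_in (connect1 ab)) (conn_in (connect1 ac')).
    by rewrite (conn_in (connect_trans (connect1 ab) (connect1 bd))).
- case: s U Sz Cws Ads => [|a [|b [|c [|d [|? ?]]]]] //= U _ Cws Ads.
  getadj Ads 0 1 ab; getadj Ads 1 2 bc; getadj Ads 2 3 cd.
  getadj Ads 0 2 ac; getadj Ads 1 3 bd; getadj Ads 0 3 ad.
  have := p4_fv ab bc cd ac bd ad.
  have := proj1 (clockwise4 fv a b c d) Cws.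
  exact: pat4_contra.
- case: s U Sz Cws Ads => [|a [|b [|c [|d [|? ?]]]]] //= U _ Cws Ads.
  getadj Ads 2 0 ca; getadj Ads 0 3 ad; getadj Ads 3 1 db.
  getadj Ads 2 3 cd; getadj Ads 0 1 ab; getadj Ads 2 1 cb.
  have := p4_fv ca ad db cd ab cb.
  have := proj1 (clockwise4 fv a b c d) Cws.
  exact: pat5_contra.
Qed.

End Build.

Unset Implicit Arguments.

Theorem proposition6 (T : finType) (e : rel T) :
  simple_graph e ->
  (caterpillar_forest e <-> exists f : T -> nat, CF_free_circular_ordering e f).
Proof.
case=> esym eirr; split.
- move=> HC; exists (fv e); split.
  + exact: fv_inj.
  + exact: no_pattern.
- by case=> f [finj Hfree]; apply: (free_cat esym eirr finj Hfree).
Qed.
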